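(* Let $\phi$ be a sentence of $\mathbf{FO}(\mathrm{NE},\sqcup)$. Then $\phi$ is logically equivalent to some first-order sentence $\phi'$, i.e. for every structure $\mathfrak M$, $\mathfrak M\models_{\{\emptyset\}}\phi$ iff $\mathfrak M\models\phi'$ in Tarski semantics.
   Context: Team semantics (lax version). Let $\mathfrak M$ be a first-order structure with domain $M$. A team $X$ is a (possibly empty) set of assignments $s:V\to M$ for a finite set $V$ of variables. Satisfaction for formulas in negation normal form: for a first-order literal $\alpha$, $\mathfrak M\models_X\alpha$ iff every $s\in X$ satisfies $\alpha$ in Tarski semantics; $\mathfrak M\models_X\psi\vee\theta$ iff $X=Y\cup Z$ with $\mathfrak M\models_Y\psi$, $\mathfrak M\models_Z\theta$; $\mathfrak M\models_X\psi\wedge\theta$ iff both hold; $\mathfrak M\models_X\exists v\psi$ iff some $F:X\to\mathcal P(M)\setminus\{\emptyset\}$ has $\mathfrak M\models_{X[F/v]}\psi$ where $X[F/v]=\{s[m/v]:s\in X,m\in F(s)\}$; $\mathfrak M\models_X\forall v\psi$ iff $\mathfrak M\models_{X[M/v]}\psi$ where $X[M/v]=\{s[m/v]:s\in X,m\in M\}$. $\mathrm{NE}$ is the atom with $\mathfrak M\models_X\mathrm{NE}$ iff $X\ne\emptyset$; $\sqcup$ is classical disjunction: $\mathfrak M\models_X\phi\sqcup\psi$ iff $\mathfrak M\models_X\phi$ or $\mathfrak M\models_X\psi$. $\mathbf{FO}(\mathrm{NE},\sqcup)$ is first-order logic in negation normal form extended with these. A sentence $\phi$ is true in $\mathfrak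 M$ iff $\mathfrak M\models_{\{\emptyset\}}\phi$. *)

(* Defs.v *)
From Stdlib Require Import Arith.
From Stdlib Require Fin.

Set Implicit Arguments.

Record signature := {
  fsym : Type; farity : fsym -> nat;
  rsym : Type; rarity : rsym -> nat }.

Section Syntax.
Variable S : signature.

Inductive term : Type :=
  | Var : nat -> term
  | App : forall f : fsym S, (Fin.t (farity S f) -> term) -> term.

Inductive atom : Type :=
  | ARel : forall r : rsym S, (Fin.t (rarity S r) -> term) -> atom
  | AEq : term -> term -> atom.

Inductive tformula : Type :=
  | TPos : atom -> tformula
  | TNeg : atom -> tformula
  | TAnd : tformula -> tformula -> tformula
  | TOr  : tformula -> tformula -> tformula
  | TEx  : nat -> tformula -> tformula
  | TAll : nat -> tformula -> tformula
  | TNE  : tformula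
  | TGor : tformula -> tformula -> tformula.

Inductive foformula : Type :=
  | FAtom : atom -> foformula
  | FNot : foformula -> foformula
  | FAnd : foformula -> foformula -> foformula
  | FOr  : foformula -> foformula -> foformula
  | FEx  : nat -> foformula -> foformula
  | FAll : nat -> foformula -> foformula.

Fixpoint term_free (n : nat) (t : term) : Prop :=
  match t with
  | Var k => n = k
  | App f args => exists i, term_free n (args i)
  end.

Definition atom_free (n : nat) (a : atom) : Prop :=
  match a with
  | ARel r args => exists i, term_free n (args i)
  | AEq t1 t2 => term_free n t1 \/ term_free n t2
  end.

Fixpoint tfree (n : nat) (p : tformula) : Prop :=
  match p with
  | TPos a | TNeg a => atom_free n a
  | TAnd p q | TOr p q | TGor p q => tfree n p \/ tfree n q
  | TEx v p | TAll v p => n <> v /\ tfree n p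
  | TNE => False
  end.

Fixpoint fofree (n : nat) (p : foformula) : Prop :=
  match p with
  | FAtom a => atom_free n a
  | FNot p => fofree n p
  | FAnd p q | FOr p q => fofree n p \/ fofree n q
  | FEx v p | FAll v p => n <> v /\ fofree n p
  end.

Definition tsentence (p : tformula) : Prop := forall n, ~ tfree n p.
Definition fosentence (p : foformula) : Prop := forall n, ~ fofree n p.

End Syntax.

Record structure (S : signature) := {
  dom : Type;
  dom_inh : inhabited dom;
  finterp : forall f : fsym S, (Fin.t (farity S f) -> dom) -> dom;
  rinterp : forall r : rsym S, (Fin.t (rarity S r) -> dom) -> Prop }.

Section Semantics.
Variable S : signature.
Variable M : structure S.

Definition fupd (s : nat -> dom M) (v : nat) (m : dom M) : nat -> dom M :=
  fun x => if Nat.eqb x v then m else s x.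

Fixpoint teval (s : nat -> dom M) (t : term S) : dom M :=
  match t with
  | Var _ k => s k
  | App f args => finterp M f (fun i => teval s (args i))
  end.

Definition atom_holds (s : nat -> dom M) (a : atom S) : Prop :=
  match a with
  | ARel r args => rinterp M r (fun i => teval s (args i))
  | AEq t1 t2 => teval s t1 = teval s t2
  end.

Fixpoint fosat (s : nat -> dom M) (p : foformula S) : Prop :=
  match p with
  | FAtom a => atom_holds s a
  | FNot p => ~ fosat s p
  | FAnd p q => fosat s p /\ fosat s q
  | FOr p q => fosat s p \/ fosat s q
  | FEx v p => exists m, fosat (fupd s v m) p
  | FAll v p => forall m, fosat (fupd s v m) p
  end.

Definition fo_true (p : foformula S) : Prop := forall s, fosat s p.

(** ---- Team semantics (assignments with finite domain, modelled as partial
    functions; the empty assignment is [fun _ => None]) ---- *)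
Definition passign := nat -> option (dom M).
Definition team := passign -> Prop.

Definition pupd (s : passign) (v : nat) (m : dom M) : passign :=
  fun x => if Nat.eqb x v then Some m else s x.

Inductive pteval (s : passign) : term S -> dom M -> Prop :=
  | pte_var k m : s k = Some m -> pteval s (Var S k) m
  | pte_app f args (vs : Fin.t (farity S f) -> dom M) :
      (forall i, pteval s (args i) (vs i)) ->
      pteval s (App f args) (finterp M f vs).

Definition plit (s : passign) (a : atom S) (pos : bool) : Prop :=
  match a with
  | ARel r args => exists vs, (forall i, pteval s (args i) (vs i)) /\
      (if pos then rinterp M r vs else ~ rinterp M r vs)
  | AEq t1 t2 => exists m1 m2, pteval s t1 m1 /\ pteval s t2 m2 /\
      (if pos then m1 = m2 else m1 <> m2)
  end.

Fixpoint tsat (X : team) (p : tformula S) : Prop :=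
  match p with
  | TPos a => forall s, X s -> plit s a true
  | TNeg a => forall s, X s -> plit s a false
  | TAnd p q => tsat X p /\ tsat X q
  | TOr p q => exists Y Z : team,
      (forall s, X s <-> Y s \/ Z s) /\ tsat Y p /\ tsat Z q
  | TEx v p => exists F : passign -> dom M -> Prop,
      (forall s, X s -> exists m, F s m) /\
      tsat (fun s' => exists s m, X s /\ F s m /\ s' = pupd s v m) p
  | TAll v p => tsat (fun s' => exists s m, X s /\ s' = pupd s v m) p
  | TNE _ => exists s, X s
  | TGor p q => tsat X p \/ tsat X q
  end.

Definition team_true (p : tformula S) : Prop :=
  tsat (fun s => s = (fun _ => None)) p.

End Semantics.

(* Main.v *)
Require Import Defs.
From Stdlib Require Import List FunctionalExtensionality Arith.
Import ListNotations.

Section Proof.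
Variable S : signature.

Definition clause := (foformula S * list (foformula S))%type.

Definition ftrue : foformula S := FAll 0 (FAtom (AEq (Var S 0) (Var S 0))).
Definition ffalse : foformula S := FNot ftrue.

Definition prodw (f : clause -> clause -> clause) (l1 l2 : list clause) :=
  flat_map (fun c1 => map (f c1) l2) l1.

Lemma in_prodw f l1 l2 c :
  In c (prodw f l1 l2) <-> exists c1 c2, In c1 l1 /\ In c2 l2 /\ c = f c1 c2.
Proof.
  unfold prodw; rewrite in_flat_map; split.
  - intros [c1 [H1 H2]]; apply in_map_iff in H2; destruct H2 as [c2 [<- H2]].
    eauto 6.
  - intros [c1 [c2 [H1 [H2 ->]]]]; exists c1; split; auto; apply in_map; auto.
Qed.

Definition cand (c1 c2 : clause) : clause := (FAnd (fst c1) (fst c2), snd c1 ++ snd c2).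
Definition ctens (c1 c2 : clause) : clause :=
  (FOr (fst c1) (fst c2),
   map (fun b => FAnd (fst c1) b) (snd c1) ++ map (fun b => FAnd (fst c2) b) (snd c2)).
Definition cex (v : nat) (c : clause) : clause :=
  (FEx v (fst c), map (fun b => FEx v (FAnd (fst c) b)) (snd c)).
Definition call (v : nat) (c : clause) : clause :=
  (FAll v (fst c), map (fun b => FEx v (FAnd (fst c) b)) (snd c)).

Fixpoint tr (p : tformula S) : list clause :=
  match p with
  | TPos a => [(FAtom a, [])]
  | TNeg a => [(FNot (FAtom a), [])]
  | TAnd p q => prodw cand (tr p) (tr q)
  | TOr p q => prodw ctens (tr p) (tr q)
  | TEx v p => map (cex v) (tr p)
  | TAll v p => map (call v) (tr p)
  | TNE _ => [(ftrue, [ftrue])]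
  | TGor p q => tr p ++ tr q
  end.

Lemma tr_free p c : In c (tr p) -> forall k,
  (fofree k (fst c) -> tfree k p) /\ (forall b, In b (snd c) -> fofree k b -> tfree k p).
Proof.
  revert c; induction p; intros c Hc k; simpl in Hc.
  - destruct Hc as [<-|[]]; simpl; split; auto; intros _ [].
  - destruct Hc as [<-|[]]; simpl; split; auto; intros _ [].
  - apply in_prodw in Hc; destruct Hc as [c1 [c2 [H1 [H2 ->]]]].
    destruct (IHp1 _ H1 k) as [A1 B1]; destruct (IHp2 _ H2 k) as [A2 B2].
    simpl; split; [intros [?|?]; auto|].
    intros b Hb; apply in_app_iff in Hb; destruct Hb; eauto.
  - apply in_prodw in Hc; destruct Hc as [c1 [c2 [H1 [H2 ->]]]].
    destruct (IHp1 _ H1 k) as [A1 B1]; destruct (IHp2 _ H2 k) as [A2 B2].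
    simpl; split; [intros [?|?]; auto|].
    intros b Hb; apply in_app_iff in Hb; destruct Hb as [Hb|Hb];
      apply in_map_iff in Hb; destruct Hb as [b' [<- Hb]]; simpl; intros [?|?]; eauto.
  - apply in_map_iff in Hc; destruct Hc as [c' [<- H]].
    destruct (IHp _ H k) as [A B]; simpl; split; [intros [? ?]; auto|].
    intros b Hb; apply in_map_iff in Hb; destruct Hb as [b' [<- Hb]]; simpl.
    intros [? [?|?]]; eauto.
  - apply in_map_iff in Hc; destruct Hc as [c' [<- H]].
    destruct (IHp _ H k) as [A B]; simpl; split; [intros [? ?]; auto|].
    intros b Hb; apply in_map_iff in Hb; destruct Hb as [b' [<- Hb]]; simpl.
    intros [? [?|?]]; eauto.
  - destruct Hc as [<-|[]]; simpl.
    split; [intros [? [?|?]]; congruence|].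
    intros b [<-|[]]; simpl; intros [? [?|?]]; congruence.
  - apply in_app_iff in Hc; destruct Hc as [H|H];
      [destruct (IHp1 _ H k) | destruct (IHp2 _ H k)]; split; simpl; eauto.
Qed.

Section Sem.
Variable M : structure S.

Definition ext (t : nat -> dom M) (s : passign M) : nat -> dom M :=
  fun x => match s x with Some m => m | None => t x end.

Lemma ext_pupd t s v m : ext t (pupd s v m) = fupd M (ext t s) v m.
Proof.
  apply functional_extensionality; intro x; unfold ext, pupd, fupd.
  destruct (x =? v); auto.
Qed.

Lemma pteval_inv s u m : pteval s u m ->
  match u with
  | Var _ k => s k = Some m
  | App f args => exists vs, (forall i, pteval s (args i) (vs i)) /\ m = finterp M f vs
  end.
Proof. intros H; destruct H; eauto. Qed.

Fixpoint pteval_iff t s (u : term S) {struct u} :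
  (forall n, term_free n u -> s n <> None) ->
  forall m, pteval s u m <-> teval M (ext t s) u = m.
Proof.
  destruct u as [k|f args]; intros Hd m; split.
  - intros H; apply pteval_inv in H; simpl; unfold ext; rewrite H; auto.
  - simpl; unfold ext; intros H. specialize (Hd k eq_refl).
    destruct (s k) eqn:E; [subst; constructor; auto| congruence].
  - intros H; apply pteval_inv in H; destruct H as [vs [Hv ->]]; simpl.
    f_equal; apply functional_extensionality; intro i.
    apply (pteval_iff t s (args i)); auto.
    intros n Hn; apply Hd; simpl; eauto.
  - simpl; intros <-; constructor; intro i.
    apply (pteval_iff t s (args i)); auto.
    intros n Hn; apply Hd; simpl; eauto.
Qed.

Lemma plit_iff t s a b : (forall n, atom_free n a -> s n <> None) ->
  (plit s a b <-> if b then atom_holds M (ext t s) a else ~ atom_holds M (ext t s) a).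
Proof.
  intros Hd; destruct a as [r args|u1 u2]; simpl in *.
  - split.
    + intros [vs [Hv H]].
      assert (E : vs = fun i => teval M (ext t s) (args i)).
      { apply functional_extensionality; intro i; symmetry.
        apply (pteval_iff t s (args i)); auto. intros n Hn; apply Hd; eauto. }
      subst; auto.
    + intros H; exists (fun i => teval M (ext t s) (args i)); split; auto.
      intro i; apply (pteval_iff t s (args i)); auto. intros n Hn; apply Hd; eauto.
  - split.
    + intros [m1 [m2 [H1 [H2 H]]]].
      apply (pteval_iff t s u1) in H1; [|intros n Hn; apply Hd; auto].
      apply (pteval_iff t s u2) in H2; [|intros n Hn; apply Hd; auto].
      subst; auto.
    + intros H; exists (teval M (ext t s) u1), (teval M (ext t s) u2).
      split; [apply (pteval_iff t s u1); auto; intros n Hn; apply Hd; auto|].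
      split; [apply (pteval_iff t s u2); auto; intros n Hn; apply Hd; auto|].
      auto.
Qed.

Definition csat (X : team M) t (c : clause) : Prop :=
  (forall s, X s -> fosat M (ext t s) (fst c)) /\
  (forall b, In b (snd c) -> exists s, X s /\ fosat M (ext t s) b).

Definition defd (X : team M) (p : tformula S) :=
  forall s, X s -> forall n, tfree n p -> s n <> None.

Lemma ftrue_sat r : fosat M r ftrue.
Proof. simpl; auto. Qed.

Lemma main_sem p : forall X t, defd X p ->
  (tsat X p <-> exists c, In c (tr p) /\ csat X t c).
Proof.
  induction p; intros X t Hd; simpl.
  - split.
    + intros H; eexists; split; [left; reflexivity|]; split; simpl.
      * intros s Hs; apply (proj1 (plit_iff t s a true (Hd s Hs))); auto.
      * intros _ [].
    + intros [c [[<-|[]] [H _]]] s Hs; simpl in H.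
      apply (proj2 (plit_iff t s a true (Hd s Hs))); auto.
  - split.
    + intros H; eexists; split; [left; reflexivity|]; split; simpl.
      * intros s Hs; apply (proj1 (plit_iff t s a false (Hd s Hs))); auto.
      * intros _ [].
    + intros [c [[<-|[]] [H _]]] s Hs; simpl in H.
      apply (proj2 (plit_iff t s a false (Hd s Hs))); auto.
  - rewrite (IHp1 X t), (IHp2 X t) by (intros s Hs n Hn; apply (Hd s Hs); simpl; auto).
    split.
    + intros [[c1 [H1 [A1 B1]]] [c2 [H2 [A2 B2]]]]; exists (cand c1 c2); split.
      * apply in_prodw; eauto 6.
      * split; simpl; [intros s Hs; split; auto|].
        intros b Hb; apply in_app_iff in Hb; destruct Hb; auto.
    + intros [c [Hc [A B]]]; apply in_prodw in Hc; destruct Hc as [c1 [c2 [H1 [H2 ->]]]].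
      simpl in A, B; split.
      * exists c1; split; auto; split; [intros s Hs; apply (A s Hs)|].
        intros b Hb; apply B, in_app_iff; auto.
      * exists c2; split; auto; split; [intros s Hs; apply (A s Hs)|].
        intros b Hb; apply B, in_app_iff; auto.
  - split.
    + intros [Y [Z [HX [HY HZ]]]].
      rewrite (IHp1 Y t) in HY by (intros s Hs n Hn; apply (Hd s); [apply HX; auto|simpl; auto]).
      rewrite (IHp2 Z t) in HZ by (intros s Hs n Hn; apply (Hd s); [apply HX; auto|simpl; auto]).
      destruct HY as [c1 [H1 [A1 B1]]]; destruct HZ as [c2 [H2 [A2 B2]]].
      exists (ctens c1 c2); split; [apply in_prodw; eauto 6|].
      split; simpl.
      * intros s Hs; apply HX in Hs; destruct Hs; [left|right]; auto.
      * intros b Hb; apply in_app_iff in Hb; destruct Hb as [Hb|Hb];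
          apply in_map_iff in Hb; destruct Hb as [b' [<- Hb]].
        -- destruct (B1 _ Hb) as [s [Hs Hb']]; exists s; split; [apply HX; auto|].
           simpl; auto.
        -- destruct (B2 _ Hb) as [s [Hs Hb']]; exists s; split; [apply HX; auto|].
           simpl; auto.
    + intros [c [Hc [A B]]]; apply in_prodw in Hc; destruct Hc as [c1 [c2 [H1 [H2 ->]]]].
      simpl in A, B.
      exists (fun s => X s /\ fosat M (ext t s) (fst c1)),
             (fun s => X s /\ fosat M (ext t s) (fst c2)).
      split; [intros s; split; [intros Hs; destruct (A s Hs); auto| intros [[]|[]]; auto]|].
      split.
      * apply (IHp1 _ t); [intros s [Hs _] n Hn; apply (Hd s Hs); simpl; auto|].
        exists c1; split; auto; split; [intros s [_ ?]; auto|].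
        intros b Hb; destruct (B (FAnd (fst c1) b)) as [s [Hs [? ?]]];
          [apply in_app_iff; left; apply in_map; auto|].
        exists s; auto.
      * apply (IHp2 _ t); [intros s [Hs _] n Hn; apply (Hd s Hs); simpl; auto|].
        exists c2; split; auto; split; [intros s [_ ?]; auto|].
        intros b Hb; destruct (B (FAnd (fst c2) b)) as [s [Hs [? ?]]];
          [apply in_app_iff; right; apply in_map; auto|].
        exists s; auto.
  -
    assert (HD : forall F : passign M -> dom M -> Prop,
      defd (fun s' => exists s m, X s /\ F s m /\ s' = pupd s n m) p).
    { intros F s' [s [m [Hs [_ ->]]]] k Hk; unfold pupd.
      destruct (k =? n) eqn:E; [congruence|].
      apply (Hd s Hs); simpl; split; auto; apply Nat.eqb_neq; auto. }
    split.
    + intros [F [HF H]]; rewrite (IHp _ t (HD F)) in H.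
      destruct H as [c [Hc [A B]]]; exists (cex n c); split; [apply in_map; auto|].
      split; simpl.
      * intros s Hs; destruct (HF s Hs) as [m Hm]; exists m.
        rewrite <- ext_pupd; apply A; eauto 7.
      * intros b Hb; apply in_map_iff in Hb; destruct Hb as [b' [<- Hb]].
        destruct (B _ Hb) as [s' [[s [m [Hs [Hm ->]]]] Hs']].
        exists s; split; auto; exists m; rewrite <- ext_pupd; split; auto.
        apply A; eauto 7.
    + intros [c' [Hc [A B]]]; apply in_map_iff in Hc; destruct Hc as [c [<- Hc]].
      simpl in A, B.
      exists (fun s m => fosat M (fupd M (ext t s) n m) (fst c)); split; [apply A|].
      apply (IHp _ t (HD _)); exists c; split; auto; split.
      * intros s' [s [m [Hs [Hm ->]]]]; rewrite ext_pupd; auto.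
      * intros b Hb; destruct (B (FEx n (FAnd (fst c) b))) as [s [Hs [m [? ?]]]];
          [apply in_map_iff; eauto|].
        exists (pupd s n m); rewrite ext_pupd; split; auto; eauto 7.
  -
    assert (HD : defd (fun s' => exists s m, X s /\ s' = pupd s n m) p).
    { intros s' [s [m [Hs ->]]] k Hk; unfold pupd.
      destruct (k =? n) eqn:E; [congruence|].
      apply (Hd s Hs); simpl; split; auto; apply Nat.eqb_neq; auto. }
    rewrite (IHp _ t HD); split.
    + intros [c [Hc [A B]]]; exists (call n c); split; [apply in_map; auto|].
      split; simpl.
      * intros s Hs m; rewrite <- ext_pupd; apply A; eauto.
      * intros b Hb; apply in_map_iff in Hb; destruct Hb as [b' [<- Hb]].
        destruct (B _ Hb) as [s' [[s [m [Hs ->]]] Hs']].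
        exists s; split; auto; exists m; rewrite <- ext_pupd; split; auto.
        apply A; eauto.
    + intros [c' [Hc [A B]]]; apply in_map_iff in Hc; destruct Hc as [c [<- Hc]].
      simpl in A, B; exists c; split; auto; split.
      * intros s' [s [m [Hs ->]]]; rewrite ext_pupd; apply A; auto.
      * intros b Hb; destruct (B (FEx n (FAnd (fst c) b))) as [s [Hs [m [? ?]]]];
          [apply in_map_iff; eauto|].
        exists (pupd s n m); rewrite ext_pupd; split; auto; eauto.
  -
    split.
    + intros [s Hs]; eexists; split; [left; reflexivity|]; split; simpl.
      * intros; reflexivity.
      * intros b [<-|[]]; exists s; split; auto; apply ftrue_sat.
    + intros [c [[<-|[]] [_ B]]]; simpl in B.
      destruct (B ftrue (or_introl eq_refl)) as [s [Hs _]]; eauto.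
  - rewrite (IHp1 X t), (IHp2 X t) by (intros s Hs k Hk; apply (Hd s Hs); simpl; auto).
    split.
    + intros [[c [? ?]]|[c [? ?]]]; exists c; rewrite in_app_iff; auto.
    + intros [c [Hc ?]]; apply in_app_iff in Hc; destruct Hc; [left|right]; eauto.
Qed.

End Sem.

Definition conjs (l : list (foformula S)) := fold_right (@FAnd S) ftrue l.
Definition disj (l : list clause) :=
  fold_right (fun c acc => FOr (FAnd (fst c) (conjs (snd c))) acc) ffalse l.

Lemma conjs_sat M r l : fosat M r (conjs l) <-> forall b, In b l -> fosat M r b.
Proof.
  induction l; simpl.
  - split; [intros _ _ []| intros _; simpl; intros; reflexivity].
  - rewrite IHl; split; [intros [? ?] b [<-|?]; auto| intros H; split; auto].
Qed.

Lemma disj_sat M r l : fosat M r (disj l) <->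
  exists c, In c l /\ fosat M r (fst c) /\ forall b, In b (snd c) -> fosat M r b.
Proof.
  induction l; simpl.
  - split; [intros H; exfalso; apply H; simpl; intros; reflexivity| intros [? [[] _]]].
  - rewrite IHl, conjs_sat; split.
    + intros [[? ?]|[c [? ?]]]; eauto.
    + intros [c [[<-|?] ?]]; [left; tauto| right; eauto].
Qed.

Lemma conjs_free n l : fofree n (conjs l) -> exists b, In b l /\ fofree n b.
Proof.
  induction l; simpl.
  - intros [? [?|?]]; congruence.
  - intros [?|H]; eauto. destruct (IHl H) as [b [? ?]]; eauto.
Qed.

Lemma disj_free n l : fofree n (disj l) ->
  exists c, In c l /\ (fofree n (fst c) \/ exists b, In b (snd c) /\ fofree n b).
Proof.
  induction l; simpl.
  - intros [? [?|?]]; congruence.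
  - intros [[?|H]|H].
    + eauto.
    + apply conjs_free in H; eauto.
    + destruct (IHl H) as [c [? ?]]; eauto.
Qed.

End Proof.

Theorem mainTheorem2 (S : signature) (phi : tformula S) :
  tsentence phi ->
  exists phi' : foformula S,
    fosentence phi' /\
    forall M : structure S, team_true M phi <-> fo_true M phi'.
Proof.
  intros Hs; exists (@disj S (@tr S phi)); split.
  - intros n Hn; apply disj_free in Hn; destruct Hn as [c [Hc [H|[b [Hb H]]]]].
    + apply (Hs n); apply (proj1 (@tr_free S phi c Hc n)); auto.
    + apply (Hs n); apply (proj2 (@tr_free S phi c Hc n) b); auto.
  - intros M.
    assert (E : forall t, team_true M phi <-> fosat M t (@disj S (@tr S phi))).
    { intros t; unfold team_true.
      rewrite (@main_sem S M phi (fun s => s = (fun _ => None)) t)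
        by (intros s _ n Hn; exfalso; apply (Hs n Hn)).
      rewrite disj_sat; unfold csat; split.
      - intros [c [Hc [A B]]]; exists c; split; auto; split.
        + apply (A _ eq_refl).
        + intros b Hb; destruct (B b Hb) as [s [-> ?]]; auto.
      - intros [c [Hc [A B]]]; exists c; split; auto; split.
        + intros s ->; auto.
        + intros b Hb; exists (fun _ => None); split; auto. }
    destruct (dom_inh M) as [d].
    split.
    + intros H t; apply E; auto.
    + intros H; apply (E (fun _ => d)); apply H.
Qed.
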